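(* Let $n \geq 1$ and $z \geq 2$ be integers, and let $\epsilon > 0$ be a constant. Let $\mathbf{f}_1^{(0)}, \dots, \mathbf{f}_n^{(0)}$ be arbitrary probability vectors in $\mathbb{R}^z$ (nonnegative entries summing to $1$). For $t \geq 1$ define recursively, for all $i, j \in \{1,\dots,n\}$, $$p_{i,j}^{(t)} = \frac{\alpha_i^{(t)}}{\epsilon + D\left(\mathbf{f}_i^{(t-1)}, \mathbf{f}_j^{(t-1)}\right)}, \qquad \mathbf{f}_i^{(t)} = \sum_{j=1}^n p_{i,j}^{(t)} \mathbf{f}_j^{(t-1)},$$ where $\alpha_i^{(t)} > 0$ is the normalizing constant chosen so that $\sum_{j=1}^n p_{i,j}^{(t)} = 1$, and $$D(\mathbf{u}, \mathbf{v}) = \sqrt{\frac{\sum_{k=1}^{z} (u_k - v_k)^2}{z}}$$ is the root-mean-square deviation. Then a consensus is reached: for every $i, j \in \{1, \dots, n\}$, $\mathbf{f}_i^{(t)} - \mathbf{f}_j^{(t)} \to 0$ as $t \to \infty$.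
   Context: The vectors $\mathbf{f}_i^{(t)}$ represent the (probabilistic) opinion of expert $i$ after $t$ revisions, over $z$ mutually exclusive outcomes; $\mathbf{f}_i^{(0)}$ is the originally reported opinion. Each revision replaces an expert's opinion by a convex combination (linear opinion pool) of all current opinions, with weights inversely related to the distance between opinions. *)

(* Defs.v *)
From mathcomp Require Import all_boot all_order all_algebra.
From mathcomp Require Import all_classical all_reals all_analysis.
Set Implicit Arguments. Unset Strict Implicit. Unset Printing Implicit Defensive.
Import Order.TTheory GRing.Theory Num.Theory.
Local Open Scope ring_scope.

(* Opinion profile: expert i : 'I_n, outcome k : 'I_z. *)
Definition profile (R : realType) (n z : nat) := 'I_n -> 'I_z -> R.

Definition prob_vec (R : realType) (z : nat) (u : 'I_z -> R) : Prop :=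
  (forall k, 0 <= u k) /\ \sum_(k < z) u k = 1.

Definition rmsd (R : realType) (z : nat) (u v : 'I_z -> R) : R :=
  Num.sqrt ((\sum_(k < z) (u k - v k) ^+ 2) / z%:R).

(* normalizing constant alpha_i: chosen so that sum_j p_ij = 1 *)
Definition alpha (R : realType) (n z : nat) (eps : R) (f : profile R n z)
  (i : 'I_n) : R :=
  (\sum_(j < n) (eps + rmsd (f i) (f j))^-1)^-1.

Definition weight (R : realType) (n z : nat) (eps : R) (f : profile R n z)
  (i j : 'I_n) : R :=
  alpha eps f i / (eps + rmsd (f i) (f j)).

Definition revise (R : realType) (n z : nat) (eps : R) (f : profile R n z)
  : profile R n z :=
  fun i k => \sum_(j < n) weight eps f i j * f j k.

Definition opinions (R : realType) (n z : nat) (eps : R) (f0 : profile R n z)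
  (t : nat) : profile R n z := iter t (revise eps) f0.

(* Main.v *)
Require Import Defs.
From mathcomp Require Import all_boot all_order all_algebra.
From mathcomp Require Import all_classical all_reals all_analysis.
From mathcomp Require Import ring lra.
Import Order.TTheory GRing.Theory Num.Theory.
Import numFieldNormedType.Exports.
Local Open Scope classical_set_scope.
Local Open Scope ring_scope.

Section S.
Variables (R : realType) (n z : nat) (eps : R).
Hypotheses (hz : (1 <= z)%N) (he : 0 < eps).

Definition unit01 (f : profile R n z) := forall i k, 0 <= f i k <= 1.

Lemma rmsd_bounds (u v : 'I_z -> R) : (forall k, 0 <= u k <= 1) -> (forall k, 0 <= v k <= 1) ->
  0 <= rmsd u v <= 1.
Proof.
move=> hu hv; rewrite /rmsd sqrtr_ge0 /=.
have zp : (0 : R) < z%:R by rewrite ltr0n.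
have hs : \sum_(k < z) (u k - v k) ^+ 2 <= z%:R.
  apply: (le_trans (y := \sum_(k < z) (1:R))); last by rewrite sumr_const card_ord.
  apply: ler_sum => k _.
  have := hu k; have := hv k; move=> /andP[? ?] /andP[? ?]; nra.
have h1 : (\sum_(k < z) (u k - v k) ^+ 2) / z%:R <= 1 by rewrite ler_pdivrMr // mul1r.
apply: (le_trans (y := Num.sqrt 1)); last by rewrite sqrtr1.
by rewrite ler_sqrt.
Qed.

Lemma weight_facts (f : profile R n z) : unit01 f -> forall i,
  (\sum_j weight eps f i j = 1) /\ forall j, 0 <= weight eps f i j /\
      eps / (eps + 1) <= n%:R * weight eps f i j.
Proof.
move=> hf i.
have hd j : 0 <= rmsd (f i) (f j) <= 1 by apply: rmsd_bounds.
have sp j : 0 < (eps + rmsd (f i) (f j)).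
  have := hd j; move=> /andP[h1 h2]. by rewrite -(addr0 0) ltr_leD.
set S := \sum_(j < n) (eps + rmsd (f i) (f j))^-1.
have Sge j : (eps + rmsd (f i) (f j))^-1 <= S.
  rewrite /S (bigD1 j) //= lerDl; apply: sumr_ge0 => l _; rewrite invr_ge0 ltW //.
have Sp : 0 < S by apply: (lt_le_trans _ (Sge i)); rewrite invr_gt0.
have Sle : S * eps <= n%:R.
  rewrite /S mulr_suml.
  apply: (le_trans (y := \sum_(l < n) (1:R))); last by rewrite sumr_const card_ord.
  apply: ler_sum => l _.
  rewrite mulrC ler_pdivrMr ?sp // mul1r lerDl; by have := hd l; case/andP.
have wE j : weight eps f i j = S^-1 * (eps + rmsd (f i) (f j))^-1 by [].
split.
  under eq_bigr do rewrite wE.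
  by rewrite -mulr_sumr mulVf // gt_eqF // Sp.
move=> j; rewrite wE; split; first by rewrite mulr_ge0 // invr_ge0 ltW ?sp ?Sp.
set u := (eps + rmsd (f i) (f j))^-1.
have uge : (eps + 1)^-1 <= u.
  rewrite lef_pV2 ?posrE ?sp ?addr_gt0 // lerD2l; by have := hd j; case/andP.
have vS : S^-1 * S = 1 by rewrite mulVf // gt_eqF // Sp.
have vp : 0 < S^-1 by rewrite invr_gt0 Sp.
have up : 0 < u by rewrite invr_gt0 sp.
have : eps * u <= n%:R * (S^-1 * u).
  have -> : eps * u = (S * eps) * (S^-1 * u) by rewrite [S * eps]mulrC -!mulrA (mulrA S) mulfV ?mul1r // gt_eqF.
  by rewrite ler_pM2r // ?mulr_gt0.
by apply: le_trans; rewrite ler_pM2l.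
Qed.
End S.
Arguments unit01 {R n z}.
Arguments weight_facts {R n z eps} hz he {f}.

Lemma aux1 (R : realFieldType) (e w a M : R) : e <= w -> a <= M -> w * a <= w * M + e * (a - M).
Proof. move=> *; nra. Qed.
Lemma aux2 (R : realFieldType) (e w a m : R) : e <= w -> m <= a -> w * m + e * (a - m) <= w * a.
Proof. move=> *; nra. Qed.
Lemma aux3 (R : realFieldType) (y y' M m eX d r : R) : y <= M + (eX - d * M) ->
  m + (eX - d * m) <= y' -> M - m <= r -> d <= 1 -> y - y' <= (1 - d) * r.
Proof. move=> *; nra. Qed.

Lemma contract (R : realType) n (x : 'I_n -> R) (w : 'I_n -> 'I_n -> R) (d r : R) :
 (forall i, \sum_j w i j = 1) -> (forall i j, d <= n%:R * w i j) -> d <= 1 ->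
 (forall j j', x j - x j' <= r) ->
 forall i i', \sum_j w i j * x j - \sum_j w i' j * x j <= (1 - d) * r.
Proof.
move=> hs hw d1 hr i i'.
have n0 : (0 < n)%N := leq_ltn_trans (leq0n i) (ltn_ord i).
have np : (0:R) < n%:R by rewrite ltr0n.
set N : R := n%:R.
set e := d / N.
have en : e * N = d by rewrite /e mulfVK // gt_eqF.
have hwe j' j : e <= w j' j by rewrite /e ler_pdivrMr // mulrC; apply: hw.
pose jM := Order.arg_max i xpredT x; pose jm := Order.arg_min i xpredT x.
have hM j : x j <= x jM by rewrite /jM; case: arg_maxP => // a _ H; exact: H.
have hm j : x jm <= x j by rewrite /jm; case: arg_minP => // a _ H; exact: H.
set M := x jM; set m := x jm.
set X := \sum_j x j.
have sE (c : R) : \sum_j (x j - c) = X - c * N by rewrite sumrB sumr_const card_ord mulr_natr.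
have up : \sum_j w i j * x j <= M + e * \sum_j (x j - M).
  have -> : M + e * \sum_j (x j - M) = \sum_j (w i j * M + e * (x j - M)).
    by rewrite [RHS]big_split /= -mulr_sumr -mulr_suml hs mul1r.
  apply: ler_sum => j _; exact: aux1.
have lo : m + e * \sum_j (x j - m) <= \sum_j w i' j * x j.
  have -> : m + e * \sum_j (x j - m) = \sum_j (w i' j * m + e * (x j - m)).
    by rewrite [RHS]big_split /= -mulr_sumr -mulr_suml hs mul1r.
  apply: ler_sum => j _; exact: aux2.
have E (c : R) : e * \sum_j (x j - c) = e * X - d * c by rewrite sE -en; ring.
rewrite !E in up lo.
exact: aux3 up lo (hr jM jm) d1.
Qed.

Lemma unit01_step (R : realType) n z (eps : R) (f : profile R n z) :
  (1 <= z)%N -> 0 < eps -> unit01 f -> unit01 (revise eps f).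
Proof.
move=> hz he hf i k; have [hs hw] := weight_facts hz he hf i.
rewrite /revise; apply/andP; split.
  apply: sumr_ge0 => j _; apply: mulr_ge0; first by case: (hw j).
  by case/andP: (hf j k).
rewrite -hs; apply: ler_sum => j _; apply: ler_piMr; first by case: (hw j).
by case/andP: (hf j k).
Qed.

Lemma aux0 (R : realFieldType) (a b : R) : 0 <= a <= 1 -> 0 <= b <= 1 -> a - b <= 1.
Proof. move=> /andP[? ?] /andP[? ?]; lra. Qed.

Theorem theorem1 (R : realType) (n z : nat) (eps : R)
  (f0 : 'I_n -> 'I_z -> R) :
  (1 <= n)%N -> (2 <= z)%N -> 0 < eps ->
  (forall i, prob_vec (f0 i)) ->
  forall (i j : 'I_n) (k : 'I_z),
    (fun t : nat => opinions eps f0 t i k - opinions eps f0 t j k) @ \oo --> (0 : R).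
Proof.
move=> n1 z2 he hp i j k.
have hz : (1 <= z)%N by apply: ltnW.
have inv t : unit01 (opinions eps f0 t).
  elim: t => [|t IH]; last exact: unit01_step.
  move=> a l /=; have [h0 h1] := hp a; rewrite h0 /= -h1 (bigD1 l) //= lerDl.
  by apply: sumr_ge0 => ? _.
set d := eps / (eps + 1).
have ep1 : 0 < eps + 1 by rewrite addr_gt0.
have d1 : d <= 1 by rewrite /d ler_pdivrMr // mul1r lerDl.
have d0 : 0 < d by rewrite /d divr_gt0.
set c := 1 - d.
have key t : forall a b, opinions eps f0 t a k - opinions eps f0 t b k <= c ^+ t.
  elim: t => [|t IH] a b.
    by rewrite expr0; apply: aux0; apply: inv.
  have W := weight_facts hz he (inv t).
  rewrite exprS.
  apply: (@contract R n (fun j => opinions eps f0 t j k) (weight eps (opinions eps f0 t)) d (c ^+ t)).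
  - by move=> a'; case: (W a').
  - by move=> a' b'; case: (W a') => _ /(_ b') [].
  - exact: d1.
  - exact: IH.
have cn : `|c| < 1.
  rewrite ger0_norm /c ?subr_ge0 //; by rewrite ltrBlDr ltrDl.
apply: (@squeeze_cvgr _ _ _ _ (fun t => - c ^+ t) (fun t => c ^+ t)).
- by apply: nearW => t; rewrite key andbT lerNl opprB key.
- by rewrite -oppr0; apply: cvgN; apply: cvg_expr.
- exact: cvg_expr.
Qed.
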